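(* Let $\mathcal{S}=(X,\xrightarrow{\Sigma},\le)$ be a WSTS with strong monotonicity whose completion $\widehat{\mathcal{S}}$ is deterministic and has strong-strict monotonicity. For every $I\in\mathrm{Idl}(X)$ and $w\in\Sigma^+$: (1) if $\{J: I\xRightarrow{w}J\}\ne\emptyset$ and $I\in\mathrm{Idl}_n(X)$ for some $n\in\mathbb{N}$, then $w(I)\in\mathrm{Idl}_n(X)$; (2) if $I\subset w(I)$ and $I\in\mathrm{Idl}_n(X)$ for some $n\in\mathbb{N}$, then $w^\infty(I)\in\mathrm{Idl}_{n+1}(X)$.
   Context: A (labeled, ordered) transition system is $\mathcal{S}=(X,\xrightarrow{\Sigma},\le)$: $X$ a set, $\Sigma$ a finite alphabet, $\xrightarrow{a}\subseteq X\times X$ for $a\in\Sigma$, $\le$ a quasi-ordering; relations extend to words ($x\xrightarrow{\varepsilon}x$, $x\xrightarrow{wa}y$ iff $x\xrightarrow{w}x'\xrightarrow{a}y$ for some $x'$). $\mathrm{Post}(x,w)=\{y:x\xrightarrow{w}y\}$, extended to sets by union; $\downarrow D=\{x:\exists y\in D,\,x\le y\}$. WSTS: $\le$ is a wqo and $x\xrightarrow{a}y$, $x'\ge x$ imply $x'\xrightarrow{w}y'$ for some $w\in\Sigma^*$ and $y'\ge y$. Strong monotonicity: $x\xrightarrow{a}y$, $x'\ge x$ imply $x'\xrightarrow{a}y'$ for some $y'\ge y$; strong-strict monotonicity: additionally $x\xrightarrow{a}y$, $x'>x$ imply $x'\xrightarrow{a}y'$ for some $y'>y$. Deterministic: at most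 one $a$-successor for each state and letter. Ideal: nonempty downward-closed directed subset of $X$; $\mathrm{Idl}(X)$ the set of ideals. For downward-closed $D$, $\mathrm{IdealDecomp}(D)$ is the finite set of $\subseteq$-maximal ideals contained in $D$. Completion: $\widehat{\mathcal{S}}=(\mathrm{Idl}(X),\Rightarrow_\Sigma,\subseteq)$ with $I\xRightarrow{a}J$ iff $J\in\mathrm{IdealDecomp}(\downarrow\mathrm{Post}(I,a))$, extended to words. When $\widehat{\mathcal{S}}$ is deterministic, $w(I)$ is the unique $J$ with $I\xRightarrow{w}J$ (when it exists). Acceleration: $w^\infty(I)=\bigcup_{k\in\mathbb{N}}w^k(I)$ if $I\subset w(I)$, else $I$. Levels: $\mathrm{Idl}_0(X)=\mathrm{Idl}(X)$; $\mathrm{Idl}_n(X)=\{\bigcup_iI_i: I_0\subset I_1\subset\cdots,\ I_i\in\mathrm{Idl}_{n-1}(X)\}$ for $n>0$. *)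

(* Defs.v *)
From mathcomp Require Import all_boot.
Set Implicit Arguments. Unset Strict Implicit. Unset Printing Implicit Defensive.

Definition subset {X : Type} (A B : X -> Prop) : Prop := forall x, A x -> B x.
Definition strict_subset {X : Type} (A B : X -> Prop) : Prop :=
  subset A B /\ ~ subset B A.
Definition set_eq {X : Type} (A B : X -> Prop) : Prop := forall x, A x <-> B x.

Definition quasi_order {X : Type} (le : X -> X -> Prop) : Prop :=
  (forall x, le x x) /\ (forall x y z, le x y -> le y z -> le x z).
Definition wqo {X : Type} (le : X -> X -> Prop) : Prop :=
  quasi_order le /\
  forall f : nat -> X, exists i j, (i < j)%N /\ le (f i) (f j).

Fixpoint wstep {X Sigma : Type} (step : Sigma -> X -> X -> Prop)
  (w : seq Sigma) (x y : X) : Prop :=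
  match w with
  | [::] => x = y
  | a :: w' => exists x', step a x x' /\ wstep step w' x' y
  end.

Definition WSTS {X Sigma : Type} (step : Sigma -> X -> X -> Prop)
  (le : X -> X -> Prop) : Prop :=
  wqo le /\
  forall a x y x', step a x y -> le x x' ->
    exists w y', wstep step w x' y' /\ le y y'.

Definition strong_monotone {X Sigma : Type} (step : Sigma -> X -> X -> Prop)
  (le : X -> X -> Prop) : Prop :=
  forall a x y x', step a x y -> le x x' -> exists y', step a x' y' /\ le y y'.

Definition downclosure {X : Type} (le : X -> X -> Prop) (D : X -> Prop) : X -> Prop :=
  fun x => exists y, D y /\ le x y.
Definition down_closed {X : Type} (le : X -> X -> Prop) (D : X -> Prop) : Prop :=
  forall x y, le x y -> D y -> D x.
Definition directed {X : Type} (le : X -> X -> Prop) (D : X -> Prop) : Prop :=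
  forall x y, D x -> D y -> exists z, D z /\ le x z /\ le y z.
Definition ideal {X : Type} (le : X -> X -> Prop) (D : X -> Prop) : Prop :=
  (exists x, D x) /\ down_closed le D /\ directed le D.

Definition IdealDecomp {X : Type} (le : X -> X -> Prop) (D : X -> Prop)
  (J : X -> Prop) : Prop :=
  ideal le J /\ subset J D /\
  forall K, ideal le K -> subset J K -> subset K D -> subset K J.

Definition Post {X Sigma : Type} (step : Sigma -> X -> X -> Prop)
  (I : X -> Prop) (a : Sigma) : X -> Prop :=
  fun y => exists x, I x /\ step a x y.

(* the completion: I =a=> J iff J in IdealDecomp(down Post(I,a)),
   on ideals *)
Definition cstep {X Sigma : Type} (step : Sigma -> X -> X -> Prop)
  (le : X -> X -> Prop) (a : Sigma) (I J : X -> Prop) : Prop :=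
  ideal le I /\ IdealDecomp le (downclosure le (Post step I a)) J.

Definition cwstep {X Sigma : Type} (step : Sigma -> X -> X -> Prop)
  (le : X -> X -> Prop) (w : seq Sigma) (I J : X -> Prop) : Prop :=
  wstep (cstep step le) w I J.

Definition completion_deterministic {X Sigma : Type}
  (step : Sigma -> X -> X -> Prop) (le : X -> X -> Prop) : Prop :=
  forall a I J J', cstep step le a I J -> cstep step le a I J' -> set_eq J J'.

Definition completion_strong_strict_monotone {X Sigma : Type}
  (step : Sigma -> X -> X -> Prop) (le : X -> X -> Prop) : Prop :=
  (forall a I J I', cstep step le a I J -> ideal le I' -> subset I I' ->
     exists J', cstep step le a I' J' /\ subset J J') /\
  (forall a I J I', cstep step le a I J -> ideal le I' -> strict_subset I I' ->
     exists J', cstep step le a I' J' /\ strict_subset J J').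

Definition wpow {Sigma : Type} (w : seq Sigma) (k : nat) : seq Sigma :=
  flatten (nseq k w).

Definition winf {X Sigma : Type} (step : Sigma -> X -> X -> Prop)
  (le : X -> X -> Prop) (w : seq Sigma) (I : X -> Prop) : X -> Prop :=
  fun x => exists k J, cwstep step le (wpow w k) I J /\ J x.

Fixpoint IdlN {X : Type} (le : X -> X -> Prop) (n : nat) (D : X -> Prop) : Prop :=
  match n with
  | 0 => ideal le D
  | n'.+1 => exists f : nat -> (X -> Prop),
      (forall i, IdlN le n' (f i)) /\
      (forall i, strict_subset (f i) (f i.+1)) /\
      set_eq D (fun x => exists i, f i x)
  end.

(* Main.v *)
From Pilot Require Import Defs.
From mathcomp Require Import all_boot.
From Stdlib Require Import Classical FunctionalExtensionality PropExtensionality IndefiniteDescription.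
From Stdlib Require List.
Import Pilot.Defs.
Set Implicit Arguments.

Lemma seteq_eq (X : Type) (A B : X -> Prop) : set_eq A B -> A = B.
Proof.
  intro H. apply functional_extensionality; intro x.
  apply propositional_extensionality; apply H.
Qed.

Lemma wf_down (X : Type) (le : X -> X -> Prop) (Hw : wqo le)
  (P : (X -> Prop) -> Prop) :
  (forall D, down_closed le D ->
     (forall D', down_closed le D' -> strict_subset D' D -> P D') -> P D) ->
  forall D, down_closed le D -> P D.
Proof.
  intros Hind D0 HD0. apply NNPP; intro HnP.
  pose T := {D : X -> Prop | down_closed le D /\ ~ P D}.
  have step : forall t : T, exists t' : T, strict_subset (proj1_sig t') (proj1_sig t).
  { intros [D [HD HnD]]. apply NNPP; intro Hno. apply HnD. apply Hind; auto.
    intros D' HD' Hs. apply NNPP; intro HnD'. apply Hno.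
    exists (exist _ D' (conj HD' HnD')). exact Hs. }
  pose next := fun t => proj1_sig (constructive_indefinite_description _ (step t)).
  have Hnext : forall t, strict_subset (proj1_sig (next t)) (proj1_sig t).
  { intro t. exact (proj2_sig (constructive_indefinite_description _ (step t))). }
  pose s := fun n => iter n next (exist _ D0 (conj HD0 HnP) : T).
  have Hx : forall n, exists x, proj1_sig (s n) x /\ ~ proj1_sig (s n.+1) x.
  { intro n. have [_ H] := Hnext (s n). apply NNPP; intro Hn. apply H.
    intros x Hx. apply NNPP; intro Hx'. apply Hn. exists x. split; auto. }
  pose xf := fun n => proj1_sig (constructive_indefinite_description _ (Hx n)).
  have Hxf : forall n, proj1_sig (s n) (xf n) /\ ~ proj1_sig (s n.+1) (xf n).
  { intro n. exact (proj2_sig (constructive_indefinite_description _ (Hx n))). }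
  have Hmono : forall i k, subset (proj1_sig (s (i + k))) (proj1_sig (s i)).
  { intros i k. induction k as [|k IH].
    - rewrite addn0. intros x H; exact H.
    - rewrite addnS. intros x H. apply IH. exact (proj1 (Hnext (s (i + k))) x H). }
  destruct Hw as [_ Hw]. destruct (Hw xf) as [i [j [Hij Hle]]].
  have Hj : proj1_sig (s i.+1) (xf j).
  { have Ej : i.+1 + (j - i.+1) = j by rewrite subnKC.
    have H := Hmono i.+1 (j - i.+1) (xf j). rewrite Ej in H.
    exact (H (proj1 (Hxf j))). }
  apply (proj2 (Hxf i)).
  have [HD _] := proj2_sig (s i.+1). exact (HD _ _ Hle Hj).
Qed.

Lemma cover_lemma (X : Type) (le : X -> X -> Prop) (Hw : wqo le) :
  forall D, down_closed le D ->
  exists L : list (X -> Prop),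
    (forall K, List.In K L -> ideal le K /\ subset K D) /\
    (forall x, D x -> exists K, List.In K L /\ K x).
Proof.
  have [[Hrefl Htrans] _] := Hw.
  apply (wf_down Hw). intros D HD IH.
  destruct (classic (exists x, D x)) as [Hne | Hemp].
  2:{ exists nil. split; [intros K [] | intros x Hx; exfalso; apply Hemp; eauto]. }
  destruct (classic (exists x y, D x /\ D y /\ ~ exists z, D z /\ le x z /\ le y z))
    as [[x [y [Hx [Hy Hn]]]] | Hn].
  - pose D1 := fun z => D z /\ ~ le x z.
    pose D2 := fun z => D z /\ ~ le y z.
    have dc1 : down_closed le D1.
    { intros a b Hab [Hb Hnb]. split; [exact (HD _ _ Hab Hb)|].
      intro H; apply Hnb; exact (Htrans _ _ _ H Hab). }
    have dc2 : down_closed le D2.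
    { intros a b Hab [Hb Hnb]. split; [exact (HD _ _ Hab Hb)|].
      intro H; apply Hnb; exact (Htrans _ _ _ H Hab). }
    have s1 : strict_subset D1 D.
    { split; [intros z [Hz _]; exact Hz|]. intro H. have [_ Hc] := H x Hx. apply Hc, Hrefl. }
    have s2 : strict_subset D2 D.
    { split; [intros z [Hz _]; exact Hz|]. intro H. have [_ Hc] := H y Hy. apply Hc, Hrefl. }
    destruct (IH D1 dc1 s1) as [L1 [HL1 HC1]].
    destruct (IH D2 dc2 s2) as [L2 [HL2 HC2]].
    exists (List.app L1 L2). split.
    + intros K HK. apply List.in_app_or in HK. destruct HK as [HK|HK].
      * have [HKi HKs] := HL1 K HK. split; auto. intros z Hz. exact (proj1 (HKs z Hz)).
      * have [HKi HKs] := HL2 K HK. split; auto. intros z Hz. exact (proj1 (HKs z Hz)).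
    + intros z Hz. destruct (classic (le x z)) as [Hxz | Hxz].
      * destruct (classic (le y z)) as [Hyz | Hyz].
        -- exfalso; apply Hn; eauto.
        -- have [K [HK HKz]] := HC2 z (conj Hz Hyz). exists K; split; auto.
           apply List.in_or_app; auto.
      * have [K [HK HKz]] := HC1 z (conj Hz Hxz). exists K; split; auto.
        apply List.in_or_app; auto.
  - exists (cons D nil). split.
    + intros K [HK | []]. subst K. split; [|intros z Hz; exact Hz].
      split; [exact Hne|]. split; [exact HD|].
      intros x y Hx Hy. apply NNPP; intro Hz. apply Hn. exists x, y. auto.
    + intros x Hx. exists D. split; [left; reflexivity | exact Hx].
Qed.

Lemma ideal_in_union (X : Type) (le : X -> X -> Prop) (L : list (X -> Prop)) :
  forall K, ideal le K ->
  (forall x, K x -> exists M, List.In M L /\ M x) ->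
  (forall M, List.In M L -> down_closed le M) ->
  exists M, List.In M L /\ subset K M.
Proof.
  induction L as [|a L IH]; intros K HK Hcov Hdc.
  - destruct HK as [[x Hx] _]. destruct (Hcov x Hx) as [M [[] _]].
  - destruct (classic (subset K a)) as [Ha | Ha].
    + exists a. split; [left; reflexivity | exact Ha].
    + have [k1 [Hk1 Hnk1]] : exists k1, K k1 /\ ~ a k1.
      { apply NNPP; intro H. apply Ha. intros z Hz. apply NNPP; intro Hz'. apply H; eauto. }
      destruct (IH K HK) as [M [HM HKM]].
      * intros x Hx. destruct HK as [_ [_ Hdir]].
        destruct (Hdir x k1 Hx Hk1) as [z [Hz [Hxz Hkz]]].
        destruct (Hcov z Hz) as [M [[HM | HM] HMz]].
        -- subst M. exfalso. apply Hnk1. exact (Hdc a (or_introl (erefl a)) _ _ Hkz HMz).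
        -- exists M. split; auto. exact (Hdc M (or_intror HM) _ _ Hxz HMz).
      * intros M HM. apply Hdc. right; exact HM.
      * exists M. split; [right; exact HM | exact HKM].
Qed.

Lemma max_in_list (X : Type) (L : list (X -> Prop)) :
  forall M, List.In M L -> exists M', List.In M' L /\ subset M M' /\
    forall M'', List.In M'' L -> subset M' M'' -> subset M'' M'.
Proof.
  induction L as [|a L IH]; [intros M []|].
  have H1 : forall M, List.In M L -> exists M', List.In M' (a :: L) /\ subset M M' /\
    forall M'', List.In M'' (a :: L) -> subset M' M'' -> subset M'' M'.
  { intros M HM. destruct (IH M HM) as [M' [HM' [HMM' Hmax]]].
    destruct (classic (subset M' a)) as [Ha | Ha].
    - exists a. split; [left; reflexivity|]. split.
      + intros x Hx. apply Ha, HMM', Hx.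
      + intros M'' [E | HM''] Hs.
        * subst M''. intros x Hx; exact Hx.
        * intros x Hx. apply Ha. apply (Hmax M'' HM''); auto.
          intros y Hy. apply Hs, Ha, Hy.
    - exists M'. split; [right; exact HM'|]. split; auto.
      intros M'' [E | HM''] Hs.
      + subst M''. contradiction.
      + apply Hmax; auto. }
  intros M [E | HM]; [|exact (H1 M HM)].
  subst M.
  destruct (classic (forall M'', List.In M'' (a :: L) -> subset a M'' -> subset M'' a)) as [Hm | Hm].
  - exists a. split; [left; reflexivity|]. split; [intros x Hx; exact Hx | exact Hm].
  - have [M1 [HM1 [Ha1 Hn1]]] : exists M1, List.In M1 (a :: L) /\ subset a M1 /\ ~ subset M1 a.
    { apply NNPP; intro H. apply Hm. intros M'' HM'' Hs. apply NNPP; intro Hn. apply H; eauto. }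
    destruct HM1 as [E | HM1].
    + subst M1. exfalso. apply Hn1. intros x Hx; exact Hx.
    + destruct (H1 M1 HM1) as [M' [HM' [HM1' Hmax]]].
      exists M'. split; auto. split; auto. intros x Hx. apply HM1', Ha1, Hx.
Qed.

Lemma max_ideal (X : Type) (le : X -> X -> Prop) (Hw : wqo le) (D K : X -> Prop) :
  down_closed le D -> ideal le K -> subset K D ->
  exists J, IdealDecomp le D J /\ subset K J.
Proof.
  intros HD HK HKD.
  destruct (cover_lemma Hw HD) as [L [HL Hcov]].
  have Hdc : forall M, List.In M L -> down_closed le M.
  { intros M HM. exact (proj1 (proj2 (proj1 (HL M HM)))). }
  have Hsub : forall K', ideal le K' -> subset K' D -> exists M, List.In M L /\ subset K' M.
  { intros K' HK' HK'D. apply (@ideal_in_union X le); auto. }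
  destruct (Hsub K HK HKD) as [M [HM HKM]].
  destruct (@max_in_list X L M HM) as [M' [HM' [HMM' Hmax]]].
  exists M'. have [HM'i HM'D] := HL M' HM'. split.
  - split; auto. split; auto. intros K' HK' HMK' HK'D.
    destruct (Hsub K' HK' HK'D) as [M'' [HM'' HK'M'']].
    intros x Hx. apply (Hmax M'' HM''); [|apply HK'M'', Hx].
    intros y Hy. apply HK'M'', HMK', Hy.
  - intros x Hx. apply HMM', HKM, Hx.
Qed.

Lemma downclosure_dc (X : Type) (le : X -> X -> Prop) (Hw : wqo le) (D : X -> Prop) :
  down_closed le (downclosure le D).
Proof.
  have [[_ Htrans] _] := Hw.
  intros x y Hxy [z [Hz Hyz]]. exists z. split; auto. eauto.
Qed.

Lemma principal_ideal (X : Type) (le : X -> X -> Prop) (Hw : wqo le) (y : X) :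
  ideal le (fun z => le z y).
Proof.
  have [[Hrefl Htrans] _] := Hw.
  split; [exists y; apply Hrefl|]. split.
  - intros a b Hab Hb. eauto.
  - intros a b Ha Hb. exists y. split; [apply Hrefl|]. auto.
Qed.

Lemma cstep_char (X Sigma : Type) (step : Sigma -> X -> X -> Prop) (le : X -> X -> Prop)
  (Hw : wqo le) (Hdet : completion_deterministic step le) a A J :
  cstep step le a A J -> J = downclosure le (Post step A a).
Proof.
  intro HJ. apply seteq_eq. intro y. split.
  - intro Hy. exact (proj1 (proj2 (proj2 HJ)) y Hy).
  - intro Hy. have [[Hrefl Htrans] _] := Hw.
    destruct (@max_ideal X le Hw (downclosure le (Post step A a)) (fun z => le z y))
      as [J' [HJ' Hy']].
    + apply downclosure_dc; auto.
    + apply principal_ideal; auto.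
    + intros z Hz. exact (@downclosure_dc X le Hw _ z y Hz Hy).
    + have HcJ' : cstep step le a A J' by split; [exact (proj1 HJ) | exact HJ'].
      apply (proj2 (Hdet a A J J' HJ HcJ' y)). apply Hy'. apply Hrefl.
Qed.

Lemma cstep_exists (X Sigma : Type) (step : Sigma -> X -> X -> Prop) (le : X -> X -> Prop)
  (Hw : wqo le) a A x y :
  ideal le A -> A x -> step a x y -> exists J, cstep step le a A J.
Proof.
  intros HA Hx Hxy. have [[Hrefl Htrans] _] := Hw.
  destruct (@max_ideal X le Hw (downclosure le (Post step A a)) (fun z => le z y))
      as [J' [HJ' Hy']].
  - apply downclosure_dc; auto.
  - apply principal_ideal; auto.
  - intros z Hz. exists y. split; auto. exists x. auto.
  - exists J'. split; auto.
Qed.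

Lemma chain_mono (X : Type) (f : nat -> X -> Prop) :
  (forall i, strict_subset (f i) (f i.+1)) -> forall i k, subset (f i) (f (i + k)).
Proof.
  intros Hs i k. induction k as [|k IH].
  - rewrite addn0. intros x H; exact H.
  - rewrite addnS. intros x H. apply (proj1 (Hs (i + k))). apply IH, H.
Qed.

Lemma IdlN_ideal (X : Type) (le : X -> X -> Prop) n D : IdlN le n D -> ideal le D.
Proof.
  revert D; induction n as [|n IH]; intros D HD; [exact HD|].
  destruct HD as [f [Hf [Hs Heq]]].
  have Hm := @chain_mono _ f Hs.
  have Hfi : forall i, ideal le (f i) by intro i; apply IH, Hf.
  split; [|split].
  - have [[x Hx] _] := Hfi 0. exists x. apply Heq. exists 0. exact Hx.
  - intros x y Hxy Hy. apply Heq. apply Heq in Hy. destruct Hy as [i Hi].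
    exists i. exact (proj1 (proj2 (Hfi i)) _ _ Hxy Hi).
  - intros x y Hx Hy. apply Heq in Hx. apply Heq in Hy.
    destruct Hx as [i Hi]. destruct Hy as [j Hj].
    have Hi' := Hm i j x Hi. have Hj' := Hm j i y Hj. rewrite addnC in Hj'.
    destruct (proj2 (proj2 (Hfi (i + j))) x y Hi' Hj') as [z [Hz [Hxz Hyz]]].
    exists z. split; auto. apply Heq. exists (i + j). exact Hz.
Qed.

Lemma IdlN_step (X Sigma : Type) (step : Sigma -> X -> X -> Prop) (le : X -> X -> Prop)
  (Hw : wqo le) (Hdet : completion_deterministic step le)
  (Hssm : completion_strong_strict_monotone step le) a :
  forall n A J, IdlN le n A -> cstep step le a A J -> IdlN le n J.
Proof.
  intro n; induction n as [|n IH]; intros A J HA HJ.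
  - exact (proj1 (proj2 HJ)).
  - have HJe := cstep_char Hw Hdet HJ.
    have [[y0 Hy0] _] := proj1 (proj2 HJ).
    have HAi := @IdlN_ideal _ _ _ _ HA.
    destruct HA as [f [Hf [Hs Heq]]].
    have Hm := @chain_mono _ f Hs.
    have HAe : A = (fun x => exists i, f i x) by apply seteq_eq.
    rewrite HJe in Hy0. destruct Hy0 as [y' [[x [Hx Hxy']] _]].
    rewrite HAe in Hx. destruct Hx as [k Hk].
    pose g := fun i => downclosure le (Post step (f (k + i)) a).
    have Hex : forall i, exists Ji, cstep step le a (f (k + i)) Ji.
    { intro i. apply (@cstep_exists X Sigma step le Hw a _ x y').
      - apply (@IdlN_ideal _ _ _ _ (Hf _)).
      - apply Hm, Hk.
      - exact Hxy'. }
    exists g. split; [|split].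
    + intro i. destruct (Hex i) as [Ji HJi].
      rewrite /g -(cstep_char Hw Hdet HJi). exact (IH _ _ (Hf _) HJi).
    + intro i. destruct (Hex i) as [Ji HJi].
      destruct (proj2 Hssm a _ Ji (f (k + i).+1) HJi (@IdlN_ideal _ _ _ _ (Hf _)) (Hs _))
        as [J' [HJ' Hsub]].
      rewrite /g -(cstep_char Hw Hdet HJi) addnS -(cstep_char Hw Hdet HJ'). exact Hsub.
    + rewrite HJe. intro z. split.
      * intros [y [[x' [Hx' Hst]] Hzy]]. rewrite HAe in Hx'. destruct Hx' as [j Hj].
        exists j. exists y. split; auto. exists x'. split; auto.
        have H := Hm j k x' Hj. rewrite addnC in H. exact H.
      * intros [i [y [[x' [Hx' Hst]] Hzy]]]. exists y. split; auto. exists x'. split; auto.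
        rewrite HAe. exists (k + i). exact Hx'.
Qed.

Lemma wstep_cat (X Sigma : Type) (step : Sigma -> X -> X -> Prop) (u v : seq Sigma) :
  forall x y z, wstep step u x y -> wstep step v y z -> wstep step (u ++ v) x z.
Proof.
  induction u as [|a u IH]; intros x y z H1 H2.
  - simpl in H1. subst y. exact H2.
  - destruct H1 as [x' [Hs Hw]]. exists x'. split; auto. eapply IH; eauto.
Qed.

Lemma wpowS (Sigma : Type) (w : seq Sigma) k : wpow w k.+1 = wpow w k ++ w.
Proof.
  rewrite /wpow /=. elim: k => [|k IH] /=; first by rewrite cats0.
  by rewrite {1}IH catA.
Qed.

Lemma cw_ideal (X Sigma : Type) (step : Sigma -> X -> X -> Prop) (le : X -> X -> Prop) w :
  forall A B, ideal le A -> cwstep step le w A B -> ideal le B.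
Proof.
  unfold cwstep in *; induction w as [|a w IH]; intros A B HA HB.
  - simpl in HB. subst. exact HA.
  - destruct HB as [A1 [H1 H2]]. apply (IH A1); auto. exact (proj1 (proj2 H1)).
Qed.

Lemma cw_det (X Sigma : Type) (step : Sigma -> X -> X -> Prop) (le : X -> X -> Prop)
  (Hdet : completion_deterministic step le) w :
  forall A B B', cwstep step le w A B -> cwstep step le w A B' -> B = B'.
Proof.
  unfold cwstep in *; induction w as [|a w IH]; intros A B B' HB HB'.
  - simpl in HB, HB'. subst. reflexivity.
  - destruct HB as [A1 [H1 H2]]. destruct HB' as [A1' [H1' H2']].
    have E : A1 = A1' by apply seteq_eq; exact (Hdet _ _ _ _ H1 H1').
    subst A1'. exact (IH _ _ _ H2 H2').
Qed.

Lemma cw_strict (X Sigma : Type) (step : Sigma -> X -> X -> Prop) (le : X -> X -> Prop)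
  (Hssm : completion_strong_strict_monotone step le) w :
  forall A B A', cwstep step le w A B -> ideal le A' -> strict_subset A A' ->
    exists B', cwstep step le w A' B' /\ strict_subset B B'.
Proof.
  unfold cwstep in *; induction w as [|a w IH]; intros A B A' HB HA' Hs.
  - simpl in HB. subst. exists A'. split; [reflexivity | exact Hs].
  - destruct HB as [A1 [H1 H2]].
    destruct (proj2 Hssm a A A1 A' H1 HA' Hs) as [A1' [H1' Hs1]].
    destruct (IH A1 B A1' H2 (proj1 (proj2 H1')) Hs1) as [B' [HB' HsB]].
    exists B'. split; auto. exists A1'. split; auto.
Qed.

Lemma cw_IdlN (X Sigma : Type) (step : Sigma -> X -> X -> Prop) (le : X -> X -> Prop)
  (Hw : wqo le) (Hdet : completion_deterministic step le)
  (Hssm : completion_strong_strict_monotone step le) w :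
  forall n A J, IdlN le n A -> cwstep step le w A J -> IdlN le n J.
Proof.
  unfold cwstep in *; induction w as [|a w IH]; intros n A J HA HJ.
  - simpl in HJ. subst. exact HA.
  - destruct HJ as [A1 [H1 H2]]. apply (IH n A1); auto.
    exact (@IdlN_step X Sigma step le Hw Hdet Hssm a n A A1 HA H1).
Qed.

Unset Implicit Arguments.

Theorem proposition6 (X : Type) (Sigma : finType)
  (step : Sigma -> X -> X -> Prop) (le : X -> X -> Prop)
  (HW : WSTS step le) (Hsm : strong_monotone step le)
  (Hdet : completion_deterministic step le)
  (Hssm : completion_strong_strict_monotone step le)
  (I : X -> Prop) (HI : ideal le I) (w : seq Sigma) (Hw : w <> [::]) :
  (forall n J, IdlN le n I -> cwstep step le w I J -> IdlN le n J) /\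
  (forall n, (exists J, cwstep step le w I J /\ strict_subset I J) ->
     IdlN le n I -> IdlN le n.+1 (winf step le w I)).
Proof.
  have Hq : wqo le := proj1 HW.
  split.
  - intros n J HIn HJ. eapply cw_IdlN; eauto.
  - intros n [J0 [HJ0 Hs0]] HIn.
    have P : forall k, exists A B, cwstep step le (wpow w k) I A /\
               cwstep step le w A B /\ strict_subset A B.
    { intro k. induction k as [|k [A [B [HA [HB HAB]]]]].
      - exists I, J0. split; [reflexivity|]. auto.
      - have HAi : ideal le A by eapply cw_ideal; eauto.
        have HBi : ideal le B by eapply cw_ideal; eauto.
        destruct (@cw_strict X Sigma step le Hssm w A B B HB HBi HAB) as [B' [HB' HBB']].
        exists B, B'. split; auto. rewrite wpowS. eapply wstep_cat; eauto. }
    pose h := fun k x => exists J, cwstep step le (wpow w k) I J /\ J x.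
    have Hh : forall k A, cwstep step le (wpow w k) I A -> h k = A.
    { intros k A HA. apply seteq_eq. intro x. split.
      - intros [J [HJ Hx]]. rewrite (@cw_det X Sigma step le Hdet _ _ _ _ HA HJ). exact Hx.
      - intro Hx. exists A. auto. }
    exists h. split; [|split].
    + intro i. destruct (P i) as [A [B [HA _]]]. rewrite (Hh i A HA).
      eapply cw_IdlN; eauto.
    + intro i. destruct (P i) as [A [B [HA [HB HAB]]]].
      rewrite (Hh i A HA).
      have HB' : cwstep step le (wpow w i.+1) I B by rewrite wpowS; eapply wstep_cat; eauto.
      rewrite (Hh i.+1 B HB'). exact HAB.
    + intro x. split; intro H; exact H.
Qed.
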